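(* In the Jolteon protocol described in the context, let $B$ be a globally direct-committed block. Then for every certified block $B'$ with $B'.r\ge B.r$, we have $B\longleftarrow^* B'$.
   Context: Jolteon protocol. There are $n=3f+1$ replicas, at most $f$ Byzantine, the rest honest; reliable authenticated channels; ideal threshold signatures in which $2f+1$ shares on the same message from distinct replicas combine into a threshold signature. A block is $B=(id,qc,tc,r,v,txn)$, with $qc$ a quorum certificate of its parent, $tc$ a timeout certificate or $\bot$, round $r$, view $v=0$, transactions $txn$, and $id$ a collision-resistant hash of the contents. A quorum certificate (QC) for $B$ is a threshold signature on $(B.id,B.r,B.v)$ from $2f+1$ shares (votes); $qc.r=B.r$; $B$ is certified if a QC for it exists; a genesis block of round $0$ has a QC. QCs are compared by round. Notation: $B_i\longleftarrow QC_i\longleftarrow B_{i+1}$ means $QC_i$ certifies $B_i$ and is contained in $B_{i+1}$; $B\longleftarrow^* B'$ ($B'$ extends $B$) means there is such a sequence (possibly of length zero) from $B$ to $B'$. A timeout message for round $r$ is a share on $r$ with the sender's $qc_{high}$; a timeout certificate (TC) for round $r$ is a threshold signature on $r$ from $2f+1$ timeout messages together with their $2f+1$ $qc_{high}$'s (all of round $<r$). Each round $r$ has a leader $L_r$ (round robin). Each replica keeps $r_{vote}=0$, $r_{cur}=1$, $qc_{high}$ = genesis QC. Propose: upon entering round $r$, $L_r$ multicasts $B=(id,qc_{high},tc,r,0,txn)$, with $tc$ the round-$(r-1)$ TC if $L_r$ entered round $r$ by receiving it, else $\bot$. Vote: upon the first valid proposal $B=(id,qc,tc,r,v,txn)$ from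 $L_r$, execute Advance Round, Lock, Commit; then if $r=r_{cur}$, $v=v_{cur}=0$, $r>r_{vote}$, and either $r=qc.r+1$ or ($r=tc.r+1$ and $qc.r\ge\max\{q.r: q$ a $qc_{high}$ in $tc\}$), send a share on $(id,r,v)$ to $L_{r+1}$ and set $r_{vote}\gets r$. Lock: upon seeing a valid QC $qc$ (formed from votes or contained in a proposal, timeout message or TC), set $qc_{high}\gets\max(qc_{high},qc)$. Commit: whenever there are two certified blocks $B,B'$ with $B'.qc$ certifying $B$ and $B'.r=B.r+1$, commit $B$ and all its ancestors. Advance Round: set $r_{cur}\gets\max(r_{cur},r)$ upon receiving or forming a round-$(r-1)$ QC or TC. Timer: upon entering round $r$, send the round-$(r-1)$ TC to $L_r$ if held and reset a timer; on expiry stop voting in round $r_{cur}$ and multicast a timeout message; upon a valid timeout message or TC execute Advance Round, Lock, Commit; upon $2f+1$ timeout messages form a TC. Definition: a block $B$ is globally direct-committed if $f+1$ honest replicas each successfully perform the Vote step on a proposal of a block $B'$ in round $B.r+1$ such that $B'.qc$ certifies $B$ (these Vote calls invoke Lock, setting $qc_{high}\gets B'.qc$, and produce $f+1$ matching votes). *)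

(* Defs.v *)
(* A relational (transition-system) model of the Jolteon
   protocol of the paper, with ideal threshold signatures and ideal hashing. *)
From Stdlib Require List.
From mathcomp Require Import all_boot.

Set Implicit Arguments.
Unset Strict Implicit.
Unset Printing Implicit Defensive.

(* The id of a block is a collision-resistant hash of its contents; we  *)
(* idealize it as the block itself.  A QC is a threshold signature on   *)
(* (B.id, B.r, B.v); since B.id determines B (and honest replicas only   *)
(* sign (B.id,B.r,B.v) for the actual B), the *data* of a QC is the     *)
(* block it certifies, and qc.r = B.r.  Whether the QC really exists is *)
(* a property of the execution (2f+1 shares), see [certified] below.    *)
(*   Blk qc tc r v txn  =  B = (id, qc, tc, r, v, txn)                  *)
(*   TCert r hs         =  TC for round r, hs = the 2f+1 timeout        *)
(*                         messages (signer id, sender's qc_high)       *)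
Inductive block : Type :=
| Genesis : block
| Blk : block -> option tcert -> nat -> nat -> seq nat -> block
with tcert : Type :=
| TCert : nat -> seq (nat * block) -> tcert.

Definition round (b : block) : nat :=
  match b with Genesis => 0 | Blk _ _ r _ _ => r end.

Definition tc_round (t : tcert) : nat := let: TCert r _ := t in r.
Definition tc_highs (t : tcert) : seq (nat * block) := let: TCert _ hs := t in hs.
Definition tc_maxqc (t : tcert) : nat := \max_(p <- tc_highs t) round p.2.

Inductive extends (B : block) : block -> Prop :=
| ext_refl : extends B B
| ext_step qc tc r v txn : extends B qc -> extends B (Blk qc tc r v txn).

(*   t_round : the last round in which the timer expired (the replica   *)
(*             stops voting in that round); 0 = never.                  *)
(*   seen r  : a valid proposal for round r from L_r was already handled *)
Record lstate := LState {
  r_vote : nat;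
  r_cur : nat;
  qc_high : block;
  t_round : nat;
  seen : nat -> Prop }.

Definition linit : lstate := LState 0 1 Genesis 0 (fun _ => False).

Definition lock (l : lstate) (q : block) : lstate :=
  if round (qc_high l) < round q
  then LState (r_vote l) (r_cur l) q (t_round l) (seen l) else l.

Definition advance (l : lstate) (k : nat) : lstate :=
  LState (r_vote l) (maxn (r_cur l) k) (qc_high l) (t_round l) (seen l).

Definition see_qc (l : lstate) (q : block) : lstate :=
  advance (lock l q) (round q).+1.

Definition see_tc (l : lstate) (t : tcert) : lstate :=
  advance (foldl (fun l p => see_qc l p.2) l (tc_highs t)) (tc_round t).+1.

Definition mark_seen (l : lstate) (r : nat) : lstate :=
  LState (r_vote l) (r_cur l) (qc_high l) (t_round l) (fun x => seen l x \/ x = r).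

Definition set_rvote (l : lstate) (r : nat) : lstate :=
  LState r (r_cur l) (qc_high l) (t_round l) (seen l).

Definition set_tround (l : lstate) (r : nat) : lstate :=
  LState (r_vote l) (r_cur l) (qc_high l) r (seen l).

Section Protocol.

Variable f : nat.
Notation n := (3 * f).+1.
Notation replica := 'I_n.
Variable byz : {set replica}.

Definition honest (i : replica) : Prop := i \notin byz.

Definition leader (r : nat) : replica := inord (r %% n).

(* Global state: local states and the pool of all signed messages sent. *)
Record gstate := GState {
  loc : replica -> lstate;
  vsh : replica -> block -> Prop;          (* vote share of i on (B.id,B.r,B.v) *)
  tsh : replica -> nat -> block -> Prop;   (* timeout message (round, qc_high) *)
  psh : replica -> block -> Prop }.        (* proposal multicast by i *)

Definition certified (s : gstate) (b : block) : Prop :=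
  b = Genesis \/
  exists Q : {set replica}, #|Q| = (2 * f).+1 /\ forall j, j \in Q -> vsh s j b.

Definition valid_tc (s : gstate) (t : tcert) : Prop :=
  size (tc_highs t) = (2 * f).+1 /\ uniq (map fst (tc_highs t)) /\
  forall j q, List.In (j, q) (tc_highs t) ->
    exists jo : replica, nat_of_ord jo = j /\ tsh s jo (tc_round t) q /\
      certified s q /\ round q < tc_round t.

Definition upd_loc (s : gstate) (i : replica) (l : lstate) : replica -> lstate :=
  fun j => if j == i then l else loc s j.

(* Proposals after an honest replica i moved from local state lo to ln:
   upon entering round r (= r_cur ln > r_cur lo), if i = L_r it multicasts
   (id, qc_high, tc, r, 0, txn), tc = the round-(r-1) TC by which it
   entered round r, if any. *)
Definition upd_psh (s : gstate) (i : replica) (lo ln : lstate)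
    (etc : option tcert) (txn : seq nat) : replica -> block -> Prop :=
  fun j b => psh s j b \/
    (j = i /\ r_cur lo < r_cur ln /\ leader (r_cur ln) = i /\
     b = Blk (qc_high ln) etc (r_cur ln) 0 txn).

Definition entered_by (ot : option tcert) (l : lstate) : option tcert :=
  match ot with
  | Some t => if (tc_round t).+1 == r_cur l then Some t else None
  | None => None
  end.

Definition handle_prop (l : lstate) (qc : block) (tc : option tcert) (r : nat)
  : lstate :=
  let l0 := see_qc l qc in
  let l1 := match tc with Some t => see_tc l0 t | None => l0 end in
  mark_seen l1 r.

Definition vote_ok (l : lstate) (qc : block) (tc : option tcert) (r v : nat)
  : Prop :=
  r = r_cur l /\ v = 0 /\ r_vote l < r /\ t_round l < r_cur l /\
  (r = (round qc).+1 \/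
   exists t, tc = Some t /\ r = (tc_round t).+1 /\ tc_maxqc t <= round qc).

Definition add_vote (s : gstate) (i : replica) (B : block) :=
  fun j b => vsh s j b \/ (j = i /\ b = B).

Inductive step (s : gstate) : gstate -> Prop :=
(* honest i sees a valid QC (formed from votes, or delivered in a message) *)
| st_see_qc i q txn :
    honest i -> certified s q ->
    let ln := see_qc (loc s i) q in
    step s (GState (upd_loc s i ln) (vsh s) (tsh s)
                   (upd_psh s i (loc s i) ln None txn))
(* honest i sees (receives or forms) a valid TC *)
| st_see_tc i t txn :
    honest i -> valid_tc s t ->
    let ln := see_tc (loc s i) t in
    step s (GState (upd_loc s i ln) (vsh s) (tsh s)
                   (upd_psh s i (loc s i) ln (entered_by (Some t) ln) txn))
| st_timeout i :
    honest i -> t_round (loc s i) < r_cur (loc s i) ->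
    let l := loc s i in
    step s (GState (upd_loc s i (set_tround l (r_cur l))) (vsh s)
                   (fun j r q => tsh s j r q \/
                                 (j = i /\ r = r_cur l /\ q = qc_high l))
                   (psh s))
| st_vote i qc tc r v tx txn :
    honest i -> psh s (leader r) (Blk qc tc r v tx) ->
    certified s qc ->
    (tc = None \/ exists t, tc = Some t /\ valid_tc s t) ->
    ~ seen (loc s i) r ->
    let l := handle_prop (loc s i) qc tc r in
    vote_ok l qc tc r v ->
    step s (GState (upd_loc s i (set_rvote l r))
                   (add_vote s i (Blk qc tc r v tx)) (tsh s)
                   (upd_psh s i (loc s i) l (entered_by tc l) txn))
| st_novote i qc tc r v tx txn :
    honest i -> psh s (leader r) (Blk qc tc r v tx) ->
    certified s qc ->
    (tc = None \/ exists t, tc = Some t /\ valid_tc s t) ->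
    ~ seen (loc s i) r ->
    let l := handle_prop (loc s i) qc tc r in
    ~ vote_ok l qc tc r v ->
    step s (GState (upd_loc s i l) (vsh s) (tsh s)
                   (upd_psh s i (loc s i) l (entered_by tc l) txn))
| st_byz_vote j b : j \in byz ->
    step s (GState (loc s) (add_vote s j b) (tsh s) (psh s))
| st_byz_timeout j r q : j \in byz ->
    step s (GState (loc s) (vsh s)
                   (fun j' r' q' => tsh s j' r' q' \/ (j' = j /\ r' = r /\ q' = q))
                   (psh s))
| st_byz_prop j b : j \in byz ->
    step s (GState (loc s) (vsh s) (tsh s)
                   (fun j' b' => psh s j' b' \/ (j' = j /\ b' = b))).

Definition init_state (txn0 : seq nat) : gstate :=
  GState (fun _ => linit) (fun _ _ => False) (fun _ _ _ => False)
         (fun j b => honest j /\ j = leader 1 /\ b = Blk Genesis None 1 0 txn0).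

Inductive reachable : gstate -> Prop :=
| reach_init txn0 : reachable (init_state txn0)
| reach_step s s' : reachable s -> step s s' -> reachable s'.

(* B is globally direct-committed (in state s): f+1 honest replicas have
   performed the Vote step on one block B' of round B.r+1 whose qc
   certifies B.  (Honest vote shares are only created by the Vote step.) *)
Definition globally_direct_committed (s : gstate) (B : block) : Prop :=
  exists tc v txn,
    let B' := Blk B tc (round B).+1 v txn in
    exists H : {set replica}, #|H| = f.+1 /\
      forall i, i \in H -> honest i /\ vsh s i B'.

End Protocol.

(* Main.v *)
Require Import Defs.
From mathcomp Require Import all_boot zify.
Set Implicit Arguments.
Unset Strict Implicit.

Definition lmono (l l' : lstate) : Prop :=
  r_vote l' = r_vote l /\ t_round l' = t_round l /\
  round (qc_high l) <= round (qc_high l') /\ r_cur l <= r_cur l'.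

Lemma lmono_refl l : lmono l l.
Proof. by rewrite /lmono; lia. Qed.

Lemma lmono_trans l1 l2 l3 : lmono l1 l2 -> lmono l2 l3 -> lmono l1 l3.
Proof. rewrite /lmono; lia. Qed.
Arguments lmono_trans {l1 l2 l3}.

Lemma lock_mono l q : lmono l (Defs.lock l q) /\ round q <= round (qc_high (Defs.lock l q)).
Proof. rewrite /Defs.lock /lmono; case: ifP => /= h; lia. Qed.

Lemma advance_mono l k : lmono l (advance l k) /\ k <= r_cur (advance l k).
Proof. rewrite /advance /lmono /=; lia. Qed.

Lemma see_qc_mono l q : lmono l (see_qc l q) /\ round q <= round (qc_high (see_qc l q))
  /\ (round q).+1 <= r_cur (see_qc l q).
Proof.
rewrite /see_qc; have [h1 h2] := lock_mono l q.
have [h3 h4] := advance_mono (Defs.lock l q) (round q).+1.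
split; first exact: lmono_trans h1 h3.
move: h3; rewrite /lmono; lia.
Qed.

Lemma see_tc_mono l t : lmono l (see_tc l t).
Proof.
rewrite /see_tc.
suff H : forall hs l, lmono l (foldl (fun l p => see_qc l p.2) l hs).
  have h1 := H _ (tc_highs t) l. have h2 := proj1 (advance_mono (foldl (fun (l0 : lstate) (p : nat * block) => see_qc l0 p.2) l (tc_highs t)) (tc_round t).+1).
  exact: lmono_trans h1 h2.
move=> T; elim=> [|p hs IH] l0 /=; first exact: lmono_refl.
apply: lmono_trans (IH _); exact: (proj1 (see_qc_mono _ _)).
Qed.

Lemma mark_seen_mono l r : lmono l (mark_seen l r).
Proof. exact: lmono_refl. Qed.

Lemma handle_mono l qc tc r : lmono l (handle_prop l qc tc r) /\
  round qc <= round (qc_high (handle_prop l qc tc r)) /\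
  (round qc).+1 <= r_cur (handle_prop l qc tc r).
Proof.
rewrite /handle_prop.
have [h1 [h2 h3]] := see_qc_mono l qc.
have h4 : lmono (see_qc l qc) (match tc with Some t => see_tc (see_qc l qc) t | None => see_qc l qc end).
  by case: tc => [t|]; [exact: see_tc_mono | exact: lmono_refl].
have h5 := lmono_trans h4 (mark_seen_mono _ r).
split; first exact: lmono_trans h1 h5.
move: h5; rewrite /lmono; lia.
Qed.

Definition vinv f (s : gstate f) (i : 'I_(3 * f).+1) : Prop :=
  forall b, vsh s i b -> exists qc tc r v tx, b = Blk qc tc r v tx /\
    r <= r_vote (loc s i) /\ round qc <= round (qc_high (loc s i)) /\
    certified s qc /\ round qc < r /\
    (r = (round qc).+1 \/ exists t, tc = Some t /\ valid_tc s t /\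
        r = (tc_round t).+1 /\ tc_maxqc t <= round qc).

Definition tinv f (s : gstate f) (i : 'I_(3 * f).+1) : Prop :=
  forall r q, tsh s i r q -> r <= t_round (loc s i) /\
    forall qc' tc' r2 v' tx', vsh s i (Blk qc' tc' r2 v' tx') -> r2 <= r ->
      round qc' <= round q.

Definition Inv f (byz : {set 'I_(3 * f).+1}) (s : gstate f) : Prop :=
  forall i, honest byz i -> vinv s i /\ tinv s i.

Definition grows f (s s' : gstate f) : Prop :=
  (forall i b, vsh s i b -> vsh s' i b) /\ (forall i r q, tsh s i r q -> tsh s' i r q).

Lemma certified_grow f (s s' : gstate f) b : grows s s' -> certified s b -> certified s' b.
Proof.
move=> [g1 _] [->|[Q [hQ hv]]]; [by left | right].
by exists Q; split=> // j /hv; apply: g1.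
Qed.

Lemma valid_tc_grow f (s s' : gstate f) t : grows s s' -> valid_tc s t -> valid_tc s' t.
Proof.
move=> g [h1 [h2 h3]]; split=> //; split=> // j q /h3 [jo [e [ht [hc hr]]]].
exists jo; split=> //; split; first exact: g.2.
by split=> //; apply: certified_grow hc.
Qed.

Lemma vinv_transfer f (s s' : gstate f) i :
  grows s s' ->
  r_vote (loc s' i) = r_vote (loc s i) ->
  round (qc_high (loc s i)) <= round (qc_high (loc s' i)) ->
  (forall b, vsh s' i b -> vsh s i b) ->
  vinv s i -> vinv s' i.
Proof.
move=> g e1 e2 hv h b /hv /h [qc [tc [r [v [tx [-> [a1 [a2 [a3 [a4 a5]]]]]]]]]].
exists qc, tc, r, v, tx; split=> //; split; first by rewrite e1.
split; first by apply: leq_trans e2.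
split; first exact: certified_grow a3.
split=> //; case: a5 => [a5|[t [b1 [b2 b3]]]]; [by left | right].
by exists t; split=> //; split=> //; apply: valid_tc_grow b2.
Qed.

Lemma tinv_transfer f (s s' : gstate f) i :
  t_round (loc s' i) = t_round (loc s i) ->
  (forall b, vsh s' i b -> vsh s i b) ->
  (forall r q, tsh s' i r q -> tsh s i r q) ->
  tinv s i -> tinv s' i.
Proof.
move=> e hv ht h r q /ht /h [a1 a2]; rewrite e; split=> // qc' tc' r2 v' tx' hb hr.
exact: (a2 _ _ _ _ _ (hv _ hb) hr).
Qed.

Lemma inv_transfer f byz (s s' : gstate f) :
  grows s s' ->
  (forall j, honest byz j -> lmono (loc s j) (loc s' j) /\
     (forall b, vsh s' j b -> vsh s j b) /\
     (forall r q, tsh s' j r q -> tsh s j r q)) ->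
  Inv byz s -> Inv byz s'.
Proof.
move=> g h I j hj; have [[m1 [m2 [m3 m4]]] [hv ht]] := h j hj.
have [I1 I2] := I j hj; split.
  exact: vinv_transfer g m1 m3 hv I1.
exact: tinv_transfer m2 hv ht I2.
Qed.

Lemma upd_loc_mono f (s : gstate f) i l j : lmono (loc s i) l ->
  lmono (loc s j) (upd_loc s i l j).
Proof. by rewrite /upd_loc; case: eqP => [->|_] //; exact: lmono_refl. Qed.

Lemma hon_ne f (byz : {set 'I_(3 * f).+1}) j j0 : honest byz j -> j0 \in byz -> j = j0 -> False.
Proof. by rewrite /honest => h h0 e; move: h; rewrite e h0. Qed.

Lemma inv_step f byz (s s' : gstate f) : Inv byz s -> step byz s s' -> Inv byz s'.
Proof.
move=> I st; case: st.
- move=> i q txn hi hc /=; apply: inv_transfer I => //= j hj.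
  by split=> //; apply: upd_loc_mono; exact: (proj1 (see_qc_mono _ _)).
- move=> i t txn hi hv /=; apply: inv_transfer I => //= j hj.
  by split=> //; apply: upd_loc_mono; exact: see_tc_mono.
- move=> i hi ht /= j hj.
  have [I1 I2] := I j hj.
  split.
    apply: (vinv_transfer _ _ _ _ I1) => /=.
    + by split=> /= *; [|left].
    + by rewrite /upd_loc; case: eqP => [->|].
    + by rewrite /upd_loc; case: eqP => [->|].
    + by [].
  move=> r q /=; rewrite /upd_loc.
  case: (eqVneq j i) => [ej|ne]; last first.
    move=> [h|[e _]]; last by rewrite e eqxx in ne.
    exact: I2 h.
  subst j; rewrite ?eqxx /=.
  move=> [h|[_ [-> ->]]].
    have [a1 a2] := I2 r q h; split=> //; apply: leq_trans a1 (ltnW ht).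
  split=> // qc' tc' r2 v' tx' hb _.
  by have [qc [tc [r0 [v [tx [[-> _ _ _ _] [_ [a _]]]]]]]] := I1 _ hb.
- move=> i qc tc r v tx txn hi hp hc htc hns /= hok.
  set l := handle_prop (loc s i) qc tc r in hok *.
  set s2 := (X in Inv byz X).
  have g : grows s s2 by split=> /= *; [left|].
  have Li : loc s2 i = set_rvote l r by rewrite /s2 /= /upd_loc eqxx.
  have Lj : forall j, j != i -> loc s2 j = loc s j.
    by move=> j ne; rewrite /s2 /= /upd_loc (negbTE ne).
  have Vs : forall j b, vsh s2 j b -> vsh s j b \/ (j = i /\ b = Blk qc tc r v tx) by [].
  have Ts : forall j r q, tsh s2 j r q -> tsh s j r q by [].
  move=> j hj; have [I1 I2] := I j hj.
  have [[m1 [m2 [m3 m4]]] [hq hr]] := handle_mono (loc s i) qc tc r.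
  rewrite -/l in m1 m2 m3 m4 hq hr.
  case: hok => [er [_ [rv [tr hcase]]]].
  case: (eqVneq j i) => [ej|ne]; last first.
    split.
      apply: (vinv_transfer g) I1; rewrite ?Lj //.
      by move=> b /Vs [//|[e _]]; rewrite e eqxx in ne.
    move=> r0 q /Ts h; have [a1 a2] := I2 r0 q h; rewrite Lj //; split=> // qc' tc' r2 v' tx' /Vs [hb|[e _]] h2.
      exact: a2 hb h2.
    by rewrite e eqxx in ne.
  subst j; split.
    move=> b /Vs [hb|[_ ->]]; rewrite Li /=.
      have [qc1 [tc1 [r1 [v1 [tx1 [-> [a1 [a2 [a3 [a4 a5]]]]]]]]]] := I1 _ hb.
      exists qc1, tc1, r1, v1, tx1; split=> //; split.
        apply: leq_trans a1 _; rewrite -m1; exact: ltnW.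
      split; first exact: leq_trans a2 m3.
      split; first exact: certified_grow g a3.
      split=> //; case: a5 => [a5|[t [b1 [b2 b3]]]]; [by left | right].
      by exists t; split=> //; split=> //; apply: valid_tc_grow g b2.
    exists qc, tc, r, v, tx; split=> //; split=> //.
    split=> //; split; first exact: certified_grow g hc.
    split; first by rewrite er.
    case: hcase => [h|[t [e1 [e2 e3]]]]; [by left | right].
    exists t; split=> //; split=> //.
    case: htc => [e|[t' [e' hv]]]; first by rewrite e in e1.
    by move: e1; rewrite e' => -[<-]; apply: valid_tc_grow g hv.
  move=> r0 q /Ts h; have [a1 a2] := I2 r0 q h; rewrite Li /=; split; first by rewrite m2.
  move=> qc' tc' r2 v' tx' /Vs [hb|[_ e]] h2; first exact: a2 hb h2.
  case: e => _ _ e _ _; subst r2.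
  move: tr; rewrite m2 -er => tr.
  have := leq_ltn_trans (leq_trans h2 a1) tr; by rewrite ltnn.
- move=> i qc tc r v tx txn hi hp hc htc hns /= hok; apply: inv_transfer I => //= j hj.
  by split=> //; apply: upd_loc_mono; exact: (proj1 (handle_mono _ _ _ _)).
- move=> j0 b h0; apply: inv_transfer I => /=.
    by split=> /= *; [left|].
  move=> j hj; split; first exact: lmono_refl.
  split=> // b' [//|[e _]]; by case: (hon_ne hj h0 e).
- move=> j0 r q h0; apply: inv_transfer I => /=.
    by split=> /= *; [|left].
  move=> j hj; split; first exact: lmono_refl.
  split=> // r' q' [//|[e _]]; by case: (hon_ne hj h0 e).
- move=> j0 b h0; apply: inv_transfer I => //= j hj.
Qed.

Definition Uinv f (byz : {set 'I_(3 * f).+1}) (s : gstate f) : Prop :=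
  forall i, honest byz i -> forall b1 b2, vsh s i b1 -> vsh s i b2 ->
    round b1 = round b2 -> b1 = b2.

Lemma uinv_step f byz (s s' : gstate f) : Inv byz s -> Uinv byz s -> step byz s s' -> Uinv byz s'.
Proof.
move=> I U st; case: st => /=.
- move=> *; exact: U.
- move=> *; exact: U.
- move=> *; exact: U.
- move=> i qc tc r v tx txn hi hp hc htc hns /= hok j hj b1 b2.
  set l := handle_prop (loc s i) qc tc r in hok *.
  have [[m1 _] _] := handle_mono (loc s i) qc tc r.
  case: hok => [er [_ [rv _]]].
  have old : forall b, vsh s i b -> round b < r.
    move=> b hb; have [qc1 [tc1 [r1 [v1 [tx1 [-> [a1 _]]]]]]] := (proj1 (I i hi)) b hb.
    by rewrite /=; apply: leq_ltn_trans a1 _; rewrite -m1.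
  rewrite /add_vote => [[h1|[e1 ->]]] [h2|[e2 ->]] er'.
  + exact: U h1 h2 er'.
  + subst j; have := old _ h1; by rewrite er' /= ltnn.
  + subst j; have := old _ h2; by rewrite -er' /= ltnn.
  + by [].
- move=> *; exact: U.
- move=> j0 b h0 j hj b1 b2 /= [h1|[e _]]; last by case: (hon_ne hj h0 e).
  move=> [h2|[e _]]; last by case: (hon_ne hj h0 e).
  exact: U j hj _ _ h1 h2.
- move=> *; exact: U.
- move=> *; exact: U.
Qed.

Lemma inv_reach f byz (s : gstate f) : reachable byz s -> Inv byz s /\ Uinv byz s.
Proof.
elim=> [txn0|s1 s2 _ [I U] st].
  by split=> i hi //=; split.
split; [exact: inv_step I st | exact: uinv_step I U st].
Qed.

Lemma card_inter f (A C : {set 'I_(3 * f).+1}) :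
  (3 * f).+1 < #|A| + #|C| -> exists x, x \in A /\ x \in C.
Proof.
move=> h; have e := cardsU A C.
have hU : #|A :|: C| <= (3 * f).+1 by rewrite -[X in _ <= X](card_ord (3 * f).+1); apply: max_card.
have : 0 < #|A :&: C| by lia.
by case/card_gt0P => x; rewrite inE => /andP [h1 h2]; exists x.
Qed.

Lemma two_quorums f (byz : {set 'I_(3 * f).+1}) (Q1 Q2 : {set 'I_(3 * f).+1}) :
  #|byz| <= f -> #|Q1| = (2 * f).+1 -> #|Q2| = (2 * f).+1 ->
  exists x, x \in Q1 /\ x \in Q2 /\ honest byz x.
Proof.
move=> hb h1 h2.
have hd : f.+1 <= #|Q2 :\: byz|.
  rewrite cardsD; have := subset_leq_card (subsetIr Q2 byz); lia.
have [x [a b]] := @card_inter f Q1 (Q2 :\: byz) ltac:(lia).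
move: b; rewrite inE => /andP [b c]; by exists x.
Qed.

Lemma quorum_H f (Q H : {set 'I_(3 * f).+1}) :
  #|Q| = (2 * f).+1 -> #|H| = f.+1 -> exists x, x \in Q /\ x \in H.
Proof. move=> h1 h2; apply: card_inter; lia. Qed.

Lemma in_map_fst (hs : seq (nat * block)) j :
  j \in map fst hs -> exists q, List.In (j, q) hs.
Proof.
elim: hs => [|[a q] hs IH] //=; rewrite in_cons => /orP [/eqP ->|h].
  by exists q; left.
by have [q' h'] := IH h; exists q'; right.
Qed.

Lemma le_maxqc (hs : seq (nat * block)) j q :
  List.In (j, q) hs -> round q <= \max_(p <- hs) round p.2.
Proof.
elim: hs => [|p hs IH] //= [->|h]; rewrite big_cons.
  by rewrite /= leq_maxl.
exact: leq_trans (IH h) (leq_maxr _ _).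
Qed.

Theorem lemma3 (f : nat) (byz : {set 'I_(3 * f).+1}) (s : gstate f) :
  #|byz| <= f ->
  reachable byz s ->
  forall B : block, globally_direct_committed byz s B ->
  forall B' : block, certified s B' -> round B <= round B' ->
  extends B B'.
Proof.
move=> hb R B [tc0 [v0 [txn0 [H [hH hHh]]]]].
have [I U] := inv_reach R.
set B'' := Blk B tc0 (round B).+1 v0 txn0 in hHh.
have [h0 h0H] : exists h, h \in H.
  by apply/card_gt0P; rewrite hH.
have [h0h h0v] := hHh h0 h0H.
have cB : certified s B.
  have [qc [tc [r [v [tx [e [_ [_ [c _]]]]]]]]] := proj1 (I h0 h0h) _ h0v.
  by case: e => -> _ _ _ _.
have hpos : forall x b, honest byz x -> vsh s x b -> 0 < round b.
  move=> x b hx hv; have [qc [tc [r [v [tx [-> [_ [_ [_ [lt _]]]]]]]]]] := proj1 (I x hx) _ hv.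
  by apply: leq_ltn_trans lt.
move=> B'; elim: {B'}(round B').+1 {-2}B' (ltnSn (round B')) => // k IH B' hk cB' hle.
case: cB' => [eG|[Q [hQ hQv]]].
  subst B'; move: hle; rewrite leqn0 => /eqP r0.
  case: cB => [->|[QB [hQB hQBv]]]; first exact: ext_refl.
  have [x [hx1 [_ hx3]]] := two_quorums hb hQB hQB.
  have := hpos x B hx3 (hQBv x hx1); by rewrite r0.
have [x [xQ xH]] := quorum_H hQ hH.
have [xh xv] := hHh x xH.
have [qc [tc [r' [v [tx [eB' [_ [_ [cq [ltq hcase]]]]]]]]]] := proj1 (I x xh) _ (hQv x xQ).
subst B'; move: hle hk => /= hle hk.
case: (ltngtP r' (round B).+1) => hr.
-
  have er : r' = round B by apply/eqP; rewrite eqn_leq hle -ltnS hr.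
  case: cB => [eG|[QB [hQB hQBv]]].
    by move: ltq; rewrite er eG /= ltn0.
  have [y [yQ [yQB yh]]] := two_quorums hb hQ hQB.
  have -> := U y yh _ _ (hQv y yQ) (hQBv y yQB) er.
  exact: ext_refl.
-
  have IHq : round B <= round qc -> extends B (Blk qc tc r' v tx).
    move=> hq; apply: ext_step; apply: IH => //; first by apply: leq_trans ltq _; rewrite -ltnS.
  apply: IHq.
  case: hcase => [e|[t [et [vt [ert hmax]]]]].
    by move: hr; rewrite e ltnS => /ltnW.
  apply: leq_trans hmax.
  have [hsz [huq hin]] := vt.
  pose S := [set jo : 'I_(3 * f).+1 | nat_of_ord jo \in map fst (tc_highs t)].
  have cS : (2 * f).+1 <= #|S|.
    rewrite -hsz -(size_map fst) cardE -(size_map (fun i : 'I_(3 * f).+1 => nat_of_ord i) (enum S)).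
    apply: (uniq_leq_size huq) => j hj.
    have [q hq] := in_map_fst hj.
    have [jo [ejo _]] := hin _ _ hq.
    rewrite -ejo; apply: map_f; rewrite mem_enum inE ejo //.
  have [z [zS zH]] : exists z, z \in S /\ z \in H.
    apply: card_inter; rewrite hH; move: cS; clearbody S; move: #|S| => m; lia.
  have [zh zv] := hHh z zH.
  move: zS; rewrite inE => /in_map_fst [q hq].
  have [jo [ejo [hts _]]] := hin _ _ hq.
  have ez : jo = z by apply: val_inj.
  subst jo.
  have [_ T2] := proj2 (I z zh) _ _ hts.
  apply: leq_trans (T2 _ _ _ _ _ zv _) _.
    by move: hr; rewrite ert ltnS.
  exact: le_maxqc hq.
-
  have := U x xh _ _ (hQv x xQ) xv hr.
  case=> -> _ _ _ _; apply: ext_step; exact: ext_refl.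
Qed.
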